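(* Let $M=\mathbb{S}^1\times[-\rho,\rho]$ carry a metric of the form $ds^2=d\sigma^2+f(\theta,\sigma)^2d\theta^2$, $f>0$ smooth, and suppose there are constants $\alpha>0$, $C\ge0$ with $R\ge-\alpha$ on $M$ and $|k_g|\le C$ on $\partial M$. Let $L$ be the minimum of the lengths of the two boundary components. Then the area $A(M)$ satisfies $$2\rho L e^{-2\rho(\alpha\rho+C)}\le A(M)\le 2\rho L e^{2\rho(\alpha\rho+C)}.$$
   Context: $R$ is the scalar curvature (twice the Gauss curvature) of the metric and $k_g$ the geodesic curvature of the boundary curves $\mathbb{S}^1\times\{\pm\rho\}$; $\theta\in[0,2\pi)$, $\sigma\in[-\rho,\rho]$. *)

(* Defs.v *)
From Stdlib Require Import Reals Lra ClassicalEpsilon.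
Open Scope R_scope.

Definition cont2 (f : R -> R -> R) : Prop :=
  forall x y eps, 0 < eps -> exists delta, 0 < delta /\
    forall x' y', Rabs (x' - x) < delta -> Rabs (y' - y) < delta ->
      Rabs (f x' y' - f x y) < eps.

Fixpoint Ck2 (n : nat) (f : R -> R -> R) : Prop :=
  cont2 f /\
  match n with
  | O => True
  | S m => exists fx fy : R -> R -> R,
      (forall x y, derivable_pt_lim (fun t => f t y) x (fx x y)) /\
      (forall x y, derivable_pt_lim (fun t => f x t) y (fy x y)) /\
      Ck2 m fx /\ Ck2 m fy
  end.

Definition smooth2 (f : R -> R -> R) : Prop := forall n, Ck2 n f.

(* Total Riemann integral: the value of RiemannInt when g is Riemann
   integrable on [a,b] (junk otherwise). *)
Definition Rint (g : R -> R) (a b : R) : R :=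
  epsilon (inhabits 0)
    (fun I => exists pr : Riemann_integrable g a b, RiemannInt pr = I).

(* Metric ds^2 = dsigma^2 + f(theta,sigma)^2 dtheta^2, first argument theta,
   second argument sigma. fss = d^2 f / dsigma^2, fs = df/dsigma. *)

(* Scalar curvature R = 2K = -2 f_{sigma sigma} / f. *)
Definition scal_curv (f fss : R -> R -> R) (th s : R) : R :=
  - 2 * fss th s / f th s.

(* Geodesic curvature of the boundary curves sigma = rho and sigma = -rho
   (w.r.t. the outward normal): k_g = f_sigma/f at sigma = rho and
   -f_sigma/f at sigma = -rho. Only |k_g| enters the statement. *)
Definition geod_curv_top (f fs : R -> R -> R) (rho th : R) : R :=
  fs th rho / f th rho.
Definition geod_curv_bot (f fs : R -> R -> R) (rho th : R) : R :=
  - (fs th (-rho) / f th (-rho)).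

Definition bdry_length (f : R -> R -> R) (s : R) : R :=
  Rint (fun th => f th s) 0 (2 * PI).

Definition area (f : R -> R -> R) (rho : R) : R :=
  Rint (fun th => Rint (fun s => f th s) (- rho) rho) 0 (2 * PI).

(* Main.v *)
Require Import Defs.
From Stdlib Require Import Reals Lra ClassicalEpsilon FunctionalExtensionality.
From Coquelicot Require Import Coquelicot.
Open Scope R_scope.

Lemma Rint_RInt g a b : a <= b -> (forall x, a<=x<=b -> continuity_pt g x) ->
  Rint g a b = RInt g a b /\ ex_RInt g a b.
Proof.
  intros Hab Hc. pose proof (@continuity_implies_RiemannInt g a b Hab Hc) as pr.
  split; [|now apply ex_RInt_Reals_1].
  unfold Rint.
  destruct (epsilon_spec (inhabits 0) (fun I => exists pr : Riemann_integrable g a b, RiemannInt pr = I)) as [pr' Hpr'].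
  { exists (RiemannInt pr); now exists pr. }
  rewrite <- Hpr'. symmetry. apply RInt_Reals.
Qed.

Lemma mvt_up g g' a b M : a <= b ->
  (forall c, a<=c<=b -> derivable_pt_lim g c (g' c)) ->
  (forall c, a<=c<=b -> g' c <= M) ->
  g b - g a <= M*(b-a).
Proof.
  intros Hab Hd Hb. destruct (Rle_lt_or_eq_dec _ _ Hab) as [Hlt|Heq].
  - destruct (MVT_cor2 g g' a b Hlt Hd) as [c [Hc Hc2]].
    rewrite Hc. assert (a<=c<=b) by lra. specialize (Hb c H).
    apply Rmult_le_compat_r; lra.
  - subst. lra.
Qed.

Lemma mvt_lo g g' a b m : a <= b ->
  (forall c, a<=c<=b -> derivable_pt_lim g c (g' c)) ->
  (forall c, a<=c<=b -> m <= g' c) ->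
  m*(b-a) <= g b - g a.
Proof.
  intros Hab Hd Hb.
  assert (H := mvt_up (fun x => - g x) (fun x => - g' x) a b (-m) Hab).
  assert (- g b - - g a <= - m * (b - a)); [|lra].
  apply H.
  - intros c Hc. apply (derivable_pt_lim_opp g). now apply Hd.
  - intros c Hc. specialize (Hb c Hc). lra.
Qed.

Lemma Rabs_le_inv x c : Rabs x <= c -> -c <= x <= c.
Proof. unfold Rabs; destruct Rcase_abs; intros; lra. Qed.

Lemma exp_mono x y : x <= y -> exp x <= exp y.
Proof. intro H. destruct (Rle_lt_or_eq_dec _ _ H) as [H'|H'].
  - left. now apply exp_increasing.
  - subst; lra. Qed.

Lemma pw_bound (h hs hss : R -> R) rho alpha C :
  0 < rho -> 0 < alpha -> 0 <= C ->
  (forall s, 0 < h s) ->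
  (forall s, derivable_pt_lim h s (hs s)) ->
  (forall s, derivable_pt_lim hs s (hss s)) ->
  (forall s, -rho <= s <= rho -> hss s / h s <= alpha / 2) ->
  Rabs (hs rho / h rho) <= C -> Rabs (hs (-rho) / h (-rho)) <= C ->
  forall s, -rho <= s <= rho ->
   h rho * exp (- (2 * rho * (alpha * rho + C))) <= h s <= h rho * exp (2 * rho * (alpha * rho + C)) /\
   h (-rho) * exp (- (2 * rho * (alpha * rho + C))) <= h s <= h (-rho) * exp (2 * rho * (alpha * rho + C)).
Proof.
  intros Hr Ha HC Hpos Hd1 Hd2 Hcurv Ht Hb.
  set (phi := fun s => hs s / h s).
  assert (Hdphi : forall s, derivable_pt_lim phi s (hss s / h s - (phi s)^2)).
  { intro s. assert (Hn : h s <> 0) by (specialize (Hpos s); lra).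
    pose proof (derivable_pt_lim_div hs h s (hss s) (hs s) (Hd2 s) (Hd1 s) Hn) as D.
    replace (hss s / h s - phi s ^ 2) with ((hss s * h s - hs s * hs s) / (h s)²).
    - exact D.
    - unfold phi, Rsqr. field. exact Hn. }
  assert (Hphi' : forall c, -rho <= c <= rho -> hss c / h c - phi c ^ 2 <= alpha / 2).
  { intros c Hc. specialize (Hcurv c Hc). nra. }
  set (K0 := C + alpha * rho).
  assert (Hphib : forall s, -rho <= s <= rho -> - K0 <= phi s <= K0).
  { intros s Hs.
    assert (U1 := mvt_up phi _ (-rho) s (alpha/2) ltac:(lra) (fun c _ => Hdphi c)
       ltac:(intros c Hc; apply Hphi'; lra)).
    assert (U2 := mvt_up phi _ s rho (alpha/2) ltac:(lra) (fun c _ => Hdphi c)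
       ltac:(intros c Hc; apply Hphi'; lra)).
    unfold phi in Ht, Hb. fold (phi rho) in Ht. fold (phi (-rho)) in Hb.
    apply Rabs_le_inv in Ht. apply Rabs_le_inv in Hb.
    unfold K0. split; nra. }
  set (g := fun s => ln (h s)).
  assert (Hdg : forall s, derivable_pt_lim g s (phi s)).
  { intro s. pose proof (derivable_pt_lim_comp h ln s (hs s) (/ h s) (Hd1 s)
      (derivable_pt_lim_ln (h s) (Hpos s))) as D.
    replace (phi s) with (/ h s * hs s). exact D. unfold phi. field.
    specialize (Hpos s); lra. }
  assert (Hhg : forall s, h s = exp (g s)).
  { intro s. unfold g. rewrite exp_ln; auto. }
  intros s Hs.
  assert (K0p : 0 <= K0) by (unfold K0; nra).
  assert (A1 := mvt_up g phi (-rho) s K0 ltac:(lra) (fun c _ => Hdg c)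
       ltac:(intros c Hc; apply Hphib; lra)).
  assert (A2 := mvt_lo g phi (-rho) s (-K0) ltac:(lra) (fun c _ => Hdg c)
       ltac:(intros c Hc; apply Hphib; lra)).
  assert (A3 := mvt_up g phi s rho K0 ltac:(lra) (fun c _ => Hdg c)
       ltac:(intros c Hc; apply Hphib; lra)).
  assert (A4 := mvt_lo g phi s rho (-K0) ltac:(lra) (fun c _ => Hdg c)
       ltac:(intros c Hc; apply Hphib; lra)).
  assert (Hk : K0 * (s - - rho) <= 2 * rho * (alpha * rho + C)) by (unfold K0 in *; nra).
  assert (Hk2 : K0 * (rho - s) <= 2 * rho * (alpha * rho + C)) by (unfold K0 in *; nra).
  rewrite !Hhg, <- !exp_plus.
  repeat split; apply exp_mono; nra.
Qed.

Lemma RInt_cst c a b : RInt (fun _ => c) a b = (b-a)*c.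
Proof. rewrite RInt_const. reflexivity. Qed.

Theorem lemma2p3 (rho alpha C : R) (f fs fss : R -> R -> R) :
  0 < rho ->
  smooth2 f ->
  (forall th s, f (th + 2 * PI) s = f th s) ->
  (forall th s, 0 < f th s) ->
  (forall th s, derivable_pt_lim (fun t => f th t) s (fs th s)) ->
  (forall th s, derivable_pt_lim (fun t => fs th t) s (fss th s)) ->
  0 < alpha -> 0 <= C ->
  (forall th s, -rho <= s <= rho -> scal_curv f fss th s >= - alpha) ->
  (forall th, Rabs (geod_curv_top f fs rho th) <= C) ->
  (forall th, Rabs (geod_curv_bot f fs rho th) <= C) ->
  let L := Rmin (bdry_length f rho) (bdry_length f (- rho)) in
  2 * rho * L * exp (- (2 * rho * (alpha * rho + C))) <= area f rho /\
  area f rho <= 2 * rho * L * exp (2 * rho * (alpha * rho + C)).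
Proof.
  intros Hr Hsm Hper Hpos Hfs Hfss Ha HC Hcurv Ht Hb L.
  set (K := 2 * rho * (alpha * rho + C)).
  destruct (Hsm 1%nat) as [_ [fx [fy [Hfx [_ [[Hcfx _] _]]]]]].
  assert (PW : forall th s, -rho <= s <= rho ->
     f th rho * exp (- K) <= f th s <= f th rho * exp K /\
     f th (-rho) * exp (- K) <= f th s <= f th (-rho) * exp K).
  { intros th. apply (pw_bound (fun s => f th s) (fun s => fs th s) (fun s => fss th s)); auto.
    - intros s Hs. specialize (Hcurv th s Hs). unfold scal_curv in Hcurv.
      assert (E : - 2 * fss th s / f th s = -2 * (fss th s / f th s)) by (unfold Rdiv; ring).
      lra.
    - apply (Ht th).
    - specialize (Hb th). apply Rabs_le_inv in Hb. apply Rabs_le; unfold geod_curv_bot in Hb. lra. }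
  assert (Cs : forall th s, continuity_pt (fun t => f th t) s).
  { intros th s. apply derivable_continuous_pt. exists (fs th s). apply Hfs. }
  assert (Cth : forall s th, continuity_pt (fun t => f t s) th).
  { intros s th. apply derivable_continuous_pt. exists (fx th s). apply Hfx. }
  assert (IN : forall th, Rint (fun s => f th s) (-rho) rho = RInt (fun s => f th s) (-rho) rho
     /\ ex_RInt (fun s => f th s) (-rho) rho).
  { intro th. apply Rint_RInt; [lra|]. intros; apply Cs. }
  assert (Dinner : forall th, is_derive (fun x => RInt (fun t => f x t) (-rho) rho) th
       (RInt (fun t => Derive (fun u => f u t) th) (-rho) rho)).
  { intro th. apply is_derive_RInt_param.
    - apply filter_forall. intros x t _. exists (fx x t). apply is_derive_Reals, Hfx.
    - intros t _ eps. destruct (Hcfx th t eps (cond_pos eps)) as [d [Hd H]].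
      exists (mkposreal d Hd). intros u v Hu Hv. simpl in Hu, Hv.
      rewrite !(is_derive_unique _ _ _ (proj2 (is_derive_Reals _ _ _) (Hfx _ _))).
      now apply H.
    - apply filter_forall. intro y. apply IN. }
  assert (Cinner : forall th, continuity_pt (fun x => RInt (fun t => f x t) (-rho) rho) th).
  { intro th. apply derivable_continuous_pt. eexists. apply is_derive_Reals, Dinner. }
  assert (Earea : area f rho = RInt (fun th => RInt (fun s => f th s) (-rho) rho) 0 (2*PI)
     /\ ex_RInt (fun th => RInt (fun s => f th s) (-rho) rho) 0 (2*PI)).
  { unfold area.
    replace (fun th => Rint (fun s => f th s) (-rho) rho) with
       (fun th => RInt (fun s => f th s) (-rho) rho).
    - apply Rint_RInt; [pose proof PI_RGT_0; lra|]. intros; apply Cinner.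
    - apply functional_extensionality. intro th. symmetry. apply IN. }
  assert (Eb : forall s, bdry_length f s = RInt (fun th => f th s) 0 (2*PI)
     /\ ex_RInt (fun th => f th s) 0 (2*PI)).
  { intro s. apply Rint_RInt; [pose proof PI_RGT_0; lra|]. intros; apply Cth. }
  destruct Earea as [EA XA]. destruct (Eb rho) as [E1 X1]. destruct (Eb (-rho)) as [E2 X2].
  assert (Hpi : 0 < 2 * PI) by (pose proof PI_RGT_0; lra).
  assert (IB : forall th, 
     2 * rho * exp (-K) * f th rho <= RInt (fun s => f th s) (-rho) rho <= 2 * rho * exp K * f th rho /\
     2 * rho * exp (-K) * f th (-rho) <= RInt (fun s => f th s) (-rho) rho <= 2 * rho * exp K * f th (-rho)).
  { intro th. destruct (IN th) as [_ Xi].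
    repeat split.
    - replace (2 * rho * exp (-K) * f th rho) with ((rho - - rho) * (f th rho * exp (-K))) by ring.
      rewrite <- RInt_cst. apply RInt_le; [lra|apply ex_RInt_const|exact Xi|].
      intros x Hx. apply (PW th x); lra.
    - replace (2 * rho * exp K * f th rho) with ((rho - - rho) * (f th rho * exp K)) by ring.
      rewrite <- RInt_cst. apply RInt_le; [lra|exact Xi|apply ex_RInt_const|].
      intros x Hx. apply (PW th x); lra.
    - replace (2 * rho * exp (-K) * f th (-rho)) with ((rho - - rho) * (f th (-rho) * exp (-K))) by ring.
      rewrite <- RInt_cst. apply RInt_le; [lra|apply ex_RInt_const|exact Xi|].
      intros x Hx. apply (PW th x); lra.
    - replace (2 * rho * exp K * f th (-rho)) with ((rho - - rho) * (f th (-rho) * exp K)) by ring.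
      rewrite <- RInt_cst. apply RInt_le; [lra|exact Xi|apply ex_RInt_const|].
      intros x Hx. apply (PW th x); lra. }
  set (k1 := 2 * rho * exp (-K)). set (k2 := 2 * rho * exp K).
  assert (S1 : forall s k, ex_RInt (fun th => f th s) 0 (2*PI) ->
     ex_RInt (fun th => k * f th s) 0 (2*PI) /\
     RInt (fun th => k * f th s) 0 (2*PI) = k * RInt (fun th => f th s) 0 (2*PI)).
  { intros s k X. split. exact (ex_RInt_scal _ _ _ k X). exact (RInt_scal _ _ _ k X). }
  destruct (S1 rho k1 X1) as [Y1 Z1]. destruct (S1 rho k2 X1) as [Y2 Z2].
  destruct (S1 (-rho) k1 X2) as [Y3 Z3]. destruct (S1 (-rho) k2 X2) as [Y4 Z4].
  assert (B1 : k1 * bdry_length f rho <= area f rho).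
  { rewrite E1, <- Z1, EA. apply RInt_le; [lra|exact Y1|exact XA|]. intros; apply IB. }
  assert (B2 : area f rho <= k2 * bdry_length f rho).
  { rewrite E1, <- Z2, EA. apply RInt_le; [lra|exact XA|exact Y2|]. intros; apply IB. }
  assert (B3 : k1 * bdry_length f (-rho) <= area f rho).
  { rewrite E2, <- Z3, EA. apply RInt_le; [lra|exact Y3|exact XA|]. intros; apply IB. }
  assert (B4 : area f rho <= k2 * bdry_length f (-rho)).
  { rewrite E2, <- Z4, EA. apply RInt_le; [lra|exact XA|exact Y4|]. intros; apply IB. }
  assert (k1p : 0 < k1) by (unfold k1; pose proof (exp_pos (-K)); nra).
  replace (2 * rho * L * exp (- K)) with (k1 * L) by (unfold k1; ring).
  replace (2 * rho * L * exp K) with (k2 * L) by (unfold k2; ring).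
  unfold L, Rmin. destruct (Rle_dec _ _); split; nra.
Qed.
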